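(* When the characteristic functions range over $V_2$, there exists an irrevocable (non-wasteful) distribution policy whose competitive ratio with respect to greedy players is $\alpha=1$.
   Context: Players: a finite set $N=\{a_1,\dots,a_n\}$. A characteristic function is $v:2^N\to\mathbb{R}_{\ge 0}$ with $v(\emptyset)=0$. There are fixed, known constants $0<\mathsf{min}\le\mathsf{max}$ and every $v$ considered is monotone and bounded: $\mathsf{min}\le v(S)\le v(T)\le\mathsf{max}$ for all nonempty $S\subseteq T\subseteq N$. $V_2$ denotes the set of such $v$ with $2\mathsf{min}\le\mathsf{max}<3\mathsf{min}$. A coalition structure is a partition $C$ of $N$; its social welfare is $\mathsf{SW}(C\mid v)=\sum_{S\in C}v(S)$. Online process: an arrival order is a permutation $\pi=(\pi_1,\dots,\pi_n)$ of $N$; player $\pi_t$ arrives at time $t$. For $S\subseteq N$, $\pi_{|S}$ denotes the players of $S$ in the relative order of $\pi$; $\pi_{|S}$ is a prefix of $\pi_{|T}$ if $S\subseteq T$ and the players of $S$ are the first $|S|$ players of $\pi_{|T}$. Let $C^{t-1}$ be the coalition structure of players arrived before time $t$ ($C^0=\emptyset$). At time $t$, player $\pi_t$ either joins an existing coalition $S\in C^{t-1}$ or forms $\{\pi_t\}$ (choice $S=\emptyset$); decisions are never revised. A distribution policy $\varphi$ assigns to every $S\subseteq N$ and order $\pi_{|S}$ a vector $(\varphi_i(S,\pi_{|S}\mid v))_{i\in S}$ with $\sum_{i\in S}\varphi_i(S,\pi_{|S})=v(S)$ (non-wasteful); it may depend on the whole function $v$. It is irrevocable if for every $\pi$, every $S\subseteq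 T\subseteq N$ with $\pi_{|S}$ a prefix of $\pi_{|T}$ and every $i\in S$, $\varphi_i(S,\pi_{|S})\le\varphi_i(T,\pi_{|T})$. Greedy players: $\pi_t$ chooses $S^*\in\arg\max_{S\in C^{t-1}\cup\{\emptyset\}}\varphi_{\pi_t}(S\cup\{\pi_t\},\pi_{|S\cup\{\pi_t\}})$ (predetermined tie-breaking). $C_g(v,\pi\mid\varphi)$ is the final structure. The competitive ratio over a class is $\alpha=\inf_{v,\pi}\mathsf{SW}(C_g(v,\pi\mid\varphi))/\max_C\mathsf{SW}(C\mid v)$, over $v$ in the class and all arrival orders $\pi$. *)

(* Defs.v *)
From HB Require Import structures.
From mathcomp Require Import all_boot all_order all_algebra.
Set Implicit Arguments. Unset Strict Implicit. Unset Printing Implicit Defensive.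
Import Order.TTheory GRing.Theory Num.Theory.
Local Open Scope ring_scope.

Section Coalitions.
Variables (R : realFieldType) (T : finType).

Definition charfun := {set T} -> R.

Definition in_class (mn mx : R) (v : charfun) : Prop :=
  v set0 = 0 /\
  forall S S' : {set T}, S != set0 -> S \subset S' ->
    [/\ mn <= v S, v S <= v S' & v S' <= mx].

Definition arrival_order (pi : seq T) : Prop := perm_eq pi (enum T).

Definition restr (pi : seq T) (S : {set T}) : seq T := [seq x <- pi | x \in S].

(* a distribution policy: phi v s i is the payoff of player i in the
   coalition S (with order s = pi_{|S}) under characteristic function v *)
Definition policy := charfun -> seq T -> T -> R.

Definition non_wasteful (mn mx : R) (phi : policy) : Prop :=
  forall v, in_class mn mx v ->
  forall pi, arrival_order pi -> forall S : {set T},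
    \sum_(i in S) phi v (restr pi S) i = v S.

Definition irrevocable (mn mx : R) (phi : policy) : Prop :=
  forall v, in_class mn mx v ->
  forall pi, arrival_order pi -> forall S S' : {set T},
    S \subset S' -> prefix (restr pi S) (restr pi S') ->
    forall i, i \in S -> phi v (restr pi S) i <= phi v (restr pi S') i.

(* a (predetermined) tie-breaking rule: given the arriving player and the
   list of options (existing coalitions, set0 = form a singleton) that
   maximise its payoff, choose one of them *)
Definition tiebreak := T -> seq {set T} -> {set T}.
Definition valid_tiebreak (tb : tiebreak) : Prop :=
  forall p (l : seq {set T}), l != [::] -> tb p l \in l.

Fixpoint greedy_aux (v : charfun) (phi : policy) (tb : tiebreak)
    (pi : seq T) (C : seq {set T}) (rest : seq T) : seq {set T} :=
  match rest with
  | [::] => C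
  | p :: r =>
    let opts := set0 :: C in
    let sc := fun S : {set T} => phi v (restr pi (p |: S)) p in
    let best := [seq S <- opts | all (fun S' => sc S' <= sc S) opts] in
    let S := tb p best in
    let C' := if S == set0 then [set p] :: C
              else [seq (if X == S then p |: X else X) | X <- C] in
    greedy_aux v phi tb pi C' r
  end.

Definition greedy_outcome v phi tb (pi : seq T) : seq {set T} :=
  greedy_aux v phi tb pi [::] pi.

Definition SW (v : charfun) (C : seq {set T}) : R := \sum_(S <- C) v S.

Definition OPT (v : charfun) : R :=
  \big[Num.max/0]_(P : {set {set T}} | partition P [set: T])
     \sum_(S in P) v S.

Definition ratios (mn mx : R) (phi : policy) (tb : tiebreak) : R -> Prop :=
  fun r => exists v pi, [/\ in_class mn mx v, arrival_order pi &
             r = SW v (greedy_outcome v phi tb pi) / OPT v].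

Definition is_inf (A : R -> Prop) (a : R) : Prop :=
  (forall r, A r -> a <= r) /\ (forall b, (forall r, A r -> b <= r) -> b <= a).

Definition competitive_ratio_is mn mx phi tb (alpha : R) : Prop :=
  is_inf (ratios mn mx phi tb) alpha.

End Coalitions.

(* Main.v *)
Require Import Defs.
From HB Require Import structures.
From mathcomp Require Import all_boot all_order all_algebra.
From mathcomp Require Import ring lra.
Import Order.TTheory GRing.Theory Num.Theory.
Local Open Scope ring_scope.
Set Implicit Arguments. Unset Strict Implicit. Unset Printing Implicit Defensive.

Section S1.
Variables (R : realFieldType) (T : finType).

Lemma blockE (P : {set {set T}}) (D A B : {set T}) (x : T) : partition P D -> A \in P -> B \in P ->
  x \in A -> x \in B -> A = B.
Proof.
move=> /partition_trivIset /trivIsetP tP PA PB xA xB.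
apply/eqP; apply/negPn/negP => nAB.
have := tP A B PA PB nAB.
move/pred0P/(_ x); by rewrite /= xA xB.
Qed.

Lemma split_part (P : {set {set T}}) (D B Y : {set T}) : partition P D -> B \in P ->
  Y \subset B -> Y != set0 -> B :\: Y != set0 ->
  [/\ partition (Y |: ((B :\: Y) |: (P :\ B))) D,
      #|Y |: ((B :\: Y) |: (P :\ B))| = #|P|.+1 &
      forall f : {set T} -> R,
        \sum_(S in Y |: ((B :\: Y) |: (P :\ B))) f S
          = \sum_(S in P) f S - f B + f Y + f (B :\: Y)].
Proof.
move=> pP PB YB Y0 BY0.
have /set0Pn [y yY] := Y0.
have /set0Pn [z zBY] := BY0.
have yB : y \in B by apply: (subsetP YB).
have zB : z \in B by move: zBY; rewrite inE => /andP[].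
have zY : z \notin Y by move: zBY; rewrite inE => /andP[].
have YnP : Y \notin P :\ B.
  rewrite !inE negb_and negbK; apply/orP; case: (boolP (Y \in P)) => YP; last by right.
  by left; apply/eqP; apply: (blockE pP YP PB yY yB).
have BYnP : B :\: Y \notin P :\ B.
  rewrite !inE negb_and negbK; apply/orP; case: (boolP (B :\: Y \in P)) => YP; last by right.
  by left; apply/eqP; apply: (blockE pP YP PB zBY zB).
have YnBY : Y != B :\: Y.
  by apply/eqP => E; have := yY; rewrite {1}E inE yY.
have YnU : Y \notin (B :\: Y) |: (P :\ B) by rewrite in_setU1 negb_or YnBY.
have UB : Y :|: (B :\: Y) = B.
  apply/setP => x; rewrite !inE; case: (boolP (x \in Y)) => xY //=.
  by rewrite (subsetP YB).
have coverE : cover P = B :|: cover (P :\ B) by rewrite /cover (big_setD1 _ PB).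
have coverE' : cover (Y |: ((B :\: Y) |: (P :\ B))) = cover P.
  by rewrite coverE /cover big_setU1 //= big_setU1 //= setUA UB.
have sumP : (\sum_(S in P) #|S| = #|B| + \sum_(S in P :\ B) #|S|)%N by rewrite (big_setD1 _ PB).
split.
- move: pP => /and3P[/eqP cP tP P0].
  apply/and3P; split.
  + by rewrite coverE' cP.
  + rewrite /trivIset coverE' big_setU1 //= big_setU1 //= addnA.
    rewrite -{1}(setIidPr YB) cardsID -sumP.
    by move: tP; rewrite /trivIset cP.
  + rewrite !in_setU1 !negb_or eq_sym Y0 eq_sym BY0 /= !inE negb_and P0 orbT //.
- by rewrite cardsU1 YnU cardsU1 BYnP (cardsD1 B P) PB.
- move=> f; rewrite big_setU1 //= big_setU1 //= (big_setD1 _ PB) /=.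
  ring.
Qed.
End S1.

Section S2.
Variables (R : realFieldType) (T : finType).

Definition goodP (v : charfun R T) (P : {set {set T}}) : bool :=
  partition P [set: T] && (\sum_(S in P) v S == OPT v).
Definition Pst (v : charfun R T) : {set {set T}} :=
  fintype.arg_max (odflt set0 [pick P | goodP v P]) (goodP v) (fun P => #|P|).

Lemma OPT_ge (v : charfun R T) (Q : {set {set T}}) :
  partition Q [set: T] -> \sum_(S in Q) v S <= OPT v.
Proof.
move=> pQ; rewrite /OPT.
exact: (@le_bigmax_cond _ _ _ 0 Q (fun P => partition P [set: T]) (fun P => \sum_(S in P) v S)).
Qed.

Lemma partT : (0 < #|T|)%N -> partition [set [set: T]] [set: T].
Proof.
move=> T0; apply/and3P; split.
- by rewrite cover1.
- exact: trivIset1.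
- rewrite in_set1 eq_sym -card_gt0 cardsT //.
Qed.

Lemma exists_good (mn mx : R) (v : charfun R T) : (0 < #|T|)%N -> 0 < mn ->
  in_class mn mx v -> exists P, goodP v P.
Proof.
move=> T0 mn0 [v0 vc].
have H : forall P, partition P [set: T] -> 0 <= \sum_(S in P) v S.
  move=> P pP; apply: sumr_ge0 => S SP.
  have S0 := partition_neq0 pP SP.
  by have [+ _ _] := vc S S S0 (subxx S) => /(lt_le_trans mn0)/ltW.
have [P0 PP0 E] := @eq_bigmax _ _ _ 0 _ (fun P => partition P [set: T])
   (fun P => \sum_(S in P) v S) (partT T0) H.
by exists P0; rewrite /goodP -E eqxx andbT.
Qed.

Lemma Pst_spec (mn mx : R) (v : charfun R T) : (0 < #|T|)%N -> 0 < mn ->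
  in_class mn mx v -> goodP v (Pst v) /\ forall Q, goodP v Q -> (#|Q| <= #|Pst v|)%N.
Proof.
move=> T0 mn0 vc.
have [P gP] := exists_good T0 mn0 vc.
rewrite /Pst; case: pickP => [P0 gP0|none]; last by move: (none P); rewrite gP.
by case: arg_maxnP => //= Q gQ Qmax; split.
Qed.

Lemma Pst_split (mn mx : R) (v : charfun R T) B p : (0 < #|T|)%N -> 0 < mn ->
  in_class mn mx v -> B \in Pst v -> p \in B -> B != [set p] ->
  v [set p] + v (B :\ p) < v B.
Proof.
move=> T0 mn0 vc BP pB Bp.
have [gP maxP] := Pst_spec T0 mn0 vc.
move: (gP) => /andP[pP /eqP sP].
rewrite ltNge; apply/negP => le.
have Y0 : [set p] != set0 by apply/set0Pn; exists p; rewrite in_set1.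
have BY0 : B :\: [set p] != set0.
  apply/negP => /eqP E; move/negP: Bp; apply; apply/eqP.
  by rewrite -(setD1K pB) E setU0.
have YB : [set p] \subset B by rewrite sub1set.
have [pP' cP' sP'] := split_part R pP BP YB Y0 BY0.
have g' : goodP v ([set p] |: ((B :\: [set p]) |: (Pst v :\ B))).
  rewrite /goodP pP' /=; rewrite eq_le OPT_ge //= sP' sP.
  by move: le; rewrite -subr_ge0 => le'; rewrite -subr_ge0; lra.
by move: (maxP _ g'); rewrite cP' ltnn.
Qed.

Lemma Pst_small (mn mx : R) (v : charfun R T) B : (0 < #|T|)%N -> 0 < mn ->
  mx < 3 * mn -> in_class mn mx v -> B \in Pst v -> (#|B| <= 2)%N.
Proof.
move=> T0 mn0 mx3 vc BP.
have [gP maxP] := Pst_spec T0 mn0 vc.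
move: (gP) => /andP[pP /eqP sP].
have [_ vcl] := vc.
rewrite leqNgt; apply/negP => B3.
have /set0Pn [a aB] : B != set0 by rewrite -card_gt0; apply: leq_trans B3.
have B'2 : (2 <= #|B :\ a|)%N by move: B3; rewrite (cardsD1 a B) aB.
have /set0Pn [b bB'] : B :\ a != set0 by rewrite -card_gt0; apply: leq_trans B'2.
have B''0 : B :\ a :\ b != set0 by rewrite -card_gt0; move: B'2; rewrite (cardsD1 b (B :\ a)) bB'.
have Ya0 : [set a] != set0 by apply/set0Pn; exists a; rewrite in_set1.
have Yb0 : [set b] != set0 by apply/set0Pn; exists b; rewrite in_set1.
have B'0 : B :\ a != set0 by rewrite -card_gt0; apply: leq_trans B'2.
have YBa : [set a] \subset B by rewrite sub1set.
have YBb : [set b] \subset B :\ a by rewrite sub1set.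
have B0 : B != set0 by apply/set0Pn; exists a.
have [pP1 _ sP1] := split_part R pP BP YBa Ya0 B'0.
have B'P1 : B :\ a \in [set a] |: ((B :\: [set a]) |: (Pst v :\ B)).
  by rewrite !in_setU1 eqxx orbT.
have [pP2 _ sP2] := split_part R pP1 B'P1 YBb Yb0 B''0.
have := OPT_ge v pP2; rewrite sP2 sP1 sP.
have [h1 _ _] := vcl _ _ Ya0 (subxx _).
have [h2 _ _] := vcl _ _ Yb0 (subxx _).
have [h3 _ _] := vcl _ _ B''0 (subxx _).
have [_ _ h4] := vcl _ _ B0 (subxx B).
move=> h; lra.
Qed.
End S2.

Section S3.
Variables (R : realFieldType) (T : finType).

Definition good (v : charfun R T) (s : seq T) : bool :=
  [exists B in Pst v, [set x in s] \subset B].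

Definition phi (mx : R) : policy R T := fun v s i =>
  if i \in s then
    if good v s then v [set x in take (index i s).+1 s] - v [set x in take (index i s) s]
    else if (index i s).+1 == size s then v [set x in s] - (size s).-1%:R * mx else mx
  else 0.

Lemma sum_seq_set (F : T -> R) (s : seq T) : uniq s ->
  \sum_(i in [set x in s]) F i = \sum_(i <- s) F i.
Proof.
move=> us; rewrite -big_enum; apply: perm_big; apply: uniq_perm => //.
  exact: enum_uniq.
by move=> x; rewrite mem_enum inE.
Qed.

Lemma sum_index (F : nat -> R) (s : seq T) : uniq s ->
  \sum_(i <- s) F (index i s) = \sum_(0 <= k < size s) F k.
Proof.
case: s => [|x0 s'] us; first by rewrite big_nil big_geq.
rewrite (big_nth x0) big_mkord [RHS]big_mkord; apply: eq_bigr => k _.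
by rewrite index_uniq.
Qed.

Lemma set_nil : [set x in ([::] : seq T)] = set0.
Proof. by apply/setP => x; rewrite !inE. Qed.

Lemma restr_set (pi : seq T) (S : {set T}) : arrival_order pi ->
  [set x in restr pi S] = S.
Proof.
move=> ao; apply/setP => x; rewrite !inE mem_filter.
by rewrite (perm_mem ao) mem_enum andbT.
Qed.

Lemma restr_uniq (pi : seq T) (S : {set T}) : arrival_order pi -> uniq (restr pi S).
Proof. by move=> ao; apply: filter_uniq; rewrite (perm_uniq ao) enum_uniq. Qed.

Lemma vbounds (mn mx : R) (v : charfun R T) X : 0 < mn -> mn <= mx ->
  in_class mn mx v -> 0 <= v X /\ v X <= mx.
Proof.
move=> mn0 mnx [v0 vc]; have [->|X0] := eqVneq X set0.
  by rewrite v0 lexx; split => //; apply: ltW; apply: lt_le_trans mnx.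
have [h1 _ h2] := vc X X X0 (subxx X); split => //.
by apply: ltW; apply: lt_le_trans h1.
Qed.

Lemma phi_nw (mn mx : R) : 0 < mn -> mn <= mx -> non_wasteful mn mx (phi mx).
Proof.
move=> mn0 mnx v vc pi ao S.
move: (restr_set S ao) (restr_uniq S ao).
set s := restr pi S => sE us.
rewrite -sE sum_seq_set //.
rewrite (eq_big_seq (fun i => if good v s then
    v [set x in take (index i s).+1 s] - v [set x in take (index i s) s]
    else if (index i s).+1 == size s then v [set x in s] - (size s).-1%:R * mx else mx)); last first.
  by move=> i si; rewrite /phi si.
clear sE; case: s us => [|x s'] us.
  by rewrite big_nil set_nil; have [v0 _] := vc.
set s := x :: s'.
case: (good v s).
- rewrite (sum_index (fun k => v [set x in take k.+1 s] - v [set x in take k s])) //.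
  rewrite telescope_sumr // take_size take0 set_nil; have [v0 _] := vc.
  by rewrite v0 subr0.
- rewrite (sum_index (fun k => if k.+1 == size s then v [set x in s] - (size s).-1%:R * mx else mx)) //.
  rewrite /= big_nat_recr //= eqxx.
  rewrite (eq_big_nat _ _ (F2 := fun _ => mx)); last first.
    by move=> k /andP[_ klt]; rewrite eqSS ltn_eqF.
  rewrite sumr_const_nat subn0 -mulr_natl /=; ring.
Qed.

Lemma phi_irr (mn mx : R) : 0 < mn -> mn <= mx -> irrevocable mn mx (phi mx).
Proof.
move=> mn0 mnx v vc pi ao S S' SS' /prefixP [t E] i iS.
have isx : i \in restr pi S by rewrite mem_filter iS (perm_mem ao) mem_enum.
rewrite E; move: isx; set s := restr pi S => isx.
case: t E => [|y t] E; first by rewrite cats0.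
have isx' : i \in s ++ y :: t by rewrite mem_cat isx.
rewrite /phi isx isx' index_cat isx.
have jlt : (index i s < size s)%N by rewrite index_mem.
rewrite !takel_cat //; last by apply: ltnW.
have -> : ((index i s).+1 == size (s ++ y :: t)) = false.
  by apply: ltn_eqF; rewrite size_cat /=; apply: leq_ltn_trans jlt _; rewrite -addSnnS leq_addr.
case: (boolP (good v (s ++ y :: t))) => g'.
- have -> : good v s.
    move: g' => /existsP [B /andP[BP sB]]; apply/existsP; exists B; rewrite BP /=.
    by apply: subset_trans sB; apply/subsetP => z; rewrite !inE mem_cat => ->.
  exact: lexx.
- case: (good v s).
  + have [h1 h2] := vbounds [set x in take (index i s).+1 s] mn0 mnx vc.
    have [h3 h4] := vbounds [set x in take (index i s) s] mn0 mnx vc.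
    lra.
  + case: ifP => _; last exact: lexx.
    have [h1 h2] := vbounds [set x in s] mn0 mnx vc.
    have h5 : 0 <= (size s).-1%:R * mx.
      by apply: mulr_ge0; [apply: ler0n | apply: ltW; apply: lt_le_trans mnx].
    lra.
Qed.
End S3.

Section S4.
Variables (R : realFieldType) (T : finType) (mn mx : R) (v : charfun R T).
Hypotheses (T0 : (0 < #|T|)%N) (mn0 : 0 < mn) (mnx : mn <= mx) (mx3 : mx < 3 * mn)
  (vc : in_class mn mx v).

Let Ps := Pst v.
Lemma pP : partition Ps [set: T].
Proof. by have [/andP[]] := Pst_spec T0 mn0 vc. Qed.

Lemma block_of p : exists2 B, B \in Ps & p \in B.
Proof.
have : p \in cover Ps by rewrite (cover_partition pP) inE.
by move/bigcupP => [B BP pB]; exists B.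
Qed.

Definition Inv (D : {set T}) (C : seq {set T}) :=
  uniq C /\ forall X, X \in C <-> exists2 B, B \in Ps & (X = B :&: D /\ X != set0).

Lemma restr_rcons (pi done rest : seq T) p (X : {set T}) :
  uniq pi -> pi = done ++ p :: rest -> X \subset [set x in done] ->
  restr pi (p |: X) = rcons [seq x <- done | x \in X] p.
Proof.
move=> upi E XD; rewrite /restr E filter_cat /= in_setU1 eqxx /=.
move: upi; rewrite E cat_uniq => /and3P[_ ndr /andP[pr _]].
have pd : p \notin done.
  apply/negP => pd; move/negP: ndr; apply; apply/hasP; exists p => //; by rewrite inE eqxx.
have -> : [seq x <- rest | x \in p |: X] = [::].
  apply/eqP; rewrite -[_ == _]negbK -has_filter; apply/hasP => -[x xr].
  rewrite in_setU1 => /orP[/eqP xp|xX]; first by move: pr; rewrite -xp xr.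
  move/negP: ndr; apply; apply/hasP; exists x; first by rewrite inE xr orbT.
  by move: (subsetP XD x xX); rewrite inE.
rewrite -cats1; congr (_ ++ _).
apply: eq_in_filter => x xd; rewrite in_setU1; case: eqP => // xp.
by move: pd; rewrite -xp xd.
Qed.

Lemma pnotin (pi done rest : seq T) p : uniq pi -> pi = done ++ p :: rest -> p \notin done.
Proof.
move=> upi E; move: upi; rewrite E cat_uniq => /and3P[_ ndr _].
apply/negP => pd; move/negP: ndr; apply; apply/hasP; exists p => //; by rewrite inE eqxx.
Qed.

Lemma phi_last (u : seq T) p : p \notin u ->
  phi mx v (rcons u p) p = if good v (rcons u p) then v [set x in rcons u p] - v [set x in u]
                           else v [set x in rcons u p] - (size u)%:R * mx.
Proof.
move=> pu; rewrite /phi mem_rcons mem_head.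
have ix : index p (rcons u p) = size u by rewrite -cats1 index_cat (negbTE pu) /= eqxx addn0.
rewrite ix size_rcons eqxx /= take_oversize ?size_rcons //.
by rewrite -cats1 take_size_cat.
Qed.

Lemma set_rcons (u : seq T) p : [set x in rcons u p] = p |: [set x in u].
Proof. by apply/setP => x; rewrite !inE mem_rcons inE. Qed.

Lemma set_filter (done : seq T) (X : {set T}) : X \subset [set x in done] ->
  [set x in [seq x <- done | x \in X]] = X.
Proof.
move=> XD; apply/setP => x; rewrite inE mem_filter; case: (boolP (x \in X)) => //= xX.
by move: (subsetP XD x xX); rewrite inE.
Qed.

Definition sc (pi : seq T) p (X : {set T}) := phi mx v (restr pi (p |: X)) p.

Lemma sc_eq (pi done rest : seq T) p (X : {set T}) : uniq pi -> pi = done ++ p :: rest ->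
  X \subset [set x in done] ->
  sc pi p X = if good v (rcons [seq x <- done | x \in X] p) then v (p |: X) - v X
              else v (p |: X) - (size [seq x <- done | x \in X])%:R * mx.
Proof.
move=> upi E XD; rewrite /sc (restr_rcons upi E XD) phi_last.
  by rewrite set_rcons !set_filter.
by rewrite mem_filter negb_and (pnotin upi E) orbT.
Qed.

Lemma vp_pos p : mn <= v [set p].
Proof.
have [_ h] := vc; have p0 : [set p] != set0 by apply/set0Pn; exists p; rewrite inE.
by have [] := h _ _ p0 (subxx _).
Qed.

Lemma sc0 (pi done rest : seq T) p : uniq pi -> pi = done ++ p :: rest ->
  sc pi p set0 = v [set p].
Proof.
move=> upi E; rewrite (sc_eq upi E (sub0set _)).
have -> : [seq x <- done | x \in set0] = [::].
  by rewrite (eq_filter (a2 := pred0)) ?filter_pred0 // => x; rewrite inE.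
have -> : good v (rcons [::] p).
  have [B BP pB] := block_of p; apply/existsP; exists B; rewrite BP /=.
  by apply/subsetP => x; rewrite !inE => /eqP ->.
by rewrite setU0; have [-> _] := vc; rewrite subr0.
Qed.

Lemma sc1 (pi done rest : seq T) p (X B : {set T}) : uniq pi -> pi = done ++ p :: rest ->
  B \in Ps -> X = B :&: [set x in done] -> X != set0 -> p \in B ->
  v [set p] < sc pi p X.
Proof.
move=> upi E BP XE X0 pB.
have XD : X \subset [set x in done] by rewrite XE subsetIr.
have pd := pnotin upi E.
rewrite (sc_eq upi E XD).
have -> : good v (rcons [seq x <- done | x \in X] p).
  apply/existsP; exists B; rewrite BP /= set_rcons set_filter //.
  by rewrite subUset sub1set pB XE subsetIl.
have XBp : X = B :\ p.
  apply/eqP; rewrite eqEcard; apply/andP; split.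
    apply/subsetP => x; rewrite XE !inE => /andP[xB xd]; rewrite xB andbT.
    by apply/eqP => xp; move: pd; rewrite -xp xd.
  have B2 := Pst_small T0 mn0 mx3 vc BP.
  move: B2; rewrite (cardsD1 p B) pB add1n ltnS => /leq_trans; apply.
  by rewrite card_gt0.
have Bp : B != [set p].
  apply/eqP => Bp; move: X0; rewrite XBp Bp setDv eqxx //.
have := Pst_split T0 mn0 vc BP pB Bp.
rewrite XBp setD1K //; lra.
Qed.

Lemma sc2 (pi done rest : seq T) p (X B : {set T}) : uniq pi -> pi = done ++ p :: rest ->
  B \in Ps -> X = B :&: [set x in done] -> X != set0 -> p \notin B ->
  sc pi p X < v [set p].
Proof.
move=> upi E BP XE X0 pB.
have XD : X \subset [set x in done] by rewrite XE subsetIr.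
have /set0Pn [x xX] := X0.
rewrite (sc_eq upi E XD).
have -> : good v (rcons [seq x <- done | x \in X] p) = false.
  apply/negbTE/negP; rewrite /good => /existsP [B' /andP[B'P sB']].
  have xB : x \in B by move: xX; rewrite XE inE => /andP[].
  have xB' : x \in B' by apply: (subsetP sB'); rewrite set_rcons set_filter // inE xX orbT.
  have EB := blockE pP BP B'P xB xB'.
  move/negP: pB; apply; rewrite EB; apply: (subsetP sB'); by rewrite inE mem_rcons mem_head.
have su : (1 <= size [seq x <- done | x \in X])%N.
  have := subsetP XD x xX; rewrite inE => xd.
  by rewrite lt0n size_eq0; apply/eqP => e; move: (mem_filter (mem X) x done); rewrite e in_nil /= xd; move: xX => /= ->.
have [_ h1] := vbounds (p |: X) mn0 mnx vc.
have h2 := vp_pos p.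
have h3 : 1 <= (size [seq x <- done | x \in X])%:R :> R by rewrite ler1n.
move: h3; set k := (size _)%:R => h3.
have h4 : 0 <= mx by apply: ltW; apply: lt_le_trans mnx.
have h5 : mx <= k * mx by rewrite -{1}(mul1r mx) ler_wpM2r.
have h6 := mn0; clearbody k.
lra.
Qed.

Variables (pi : seq T) (tb : tiebreak T).
Hypotheses (ao : arrival_order pi) (vtb : valid_tiebreak tb).

Lemma upi : uniq pi.
Proof. by rewrite (perm_uniq ao) enum_uniq. Qed.

Lemma setI_notin (B D : {set T}) p : p \notin B -> B :&: (p |: D) = B :&: D.
Proof.
move=> pB; apply/setP => x; rewrite !inE; case: (boolP (x \in B)) => //= xB.
by case: eqP => // xp; move: pB; rewrite -xp xB.
Qed.

Lemma setI_in (B D : {set T}) p : p \in B -> B :&: (p |: D) = p |: (B :&: D).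
Proof.
move=> pB; apply/setP => x; rewrite !inE; case: eqP => [->|_] //=; by rewrite pB.
Qed.

Lemma step (done rest : seq T) p C : pi = done ++ p :: rest -> Inv [set x in done] C ->
  let opts := set0 :: C in
  let scf := fun S : {set T} => phi mx v (restr pi (p |: S)) p in
  let best := [seq S <- opts | all (fun S' => scf S' <= scf S) opts] in
  let S := tb p best in
  Inv [set x in rcons done p]
    (if S == set0 then [set p] :: C else [seq (if X == S then p |: X else X) | X <- C]).
Proof.
move=> E [uC HC] opts scf best S.
rewrite set_rcons; set D := [set x in done].
have pD : p \notin D by rewrite inE (pnotin upi E).
have s0 : scf set0 = v [set p] by exact: (sc0 upi E).
have CpD : forall X, X \in C -> p \notin X.
  move=> X /HC [B' _ [XE _]]; rewrite XE inE negb_and pD orbT //.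
have [B BP pB] := block_of p.
have blk : forall B', B' \in Ps -> p \in B' -> B' = B.
  by move=> B' B'P pB'; apply: (blockE pP B'P BP pB' pB).
case: (eqVneq (B :&: D) set0) => BD.
- (* p starts a new coalition *)
  have other : forall X, X \in C -> scf X < v [set p].
    move=> X /HC [B' B'P [XE X0]].
    case: (boolP (p \in B')) => pB'.
      by move: X0; rewrite XE (blk B' B'P pB') BD eqxx.
    exact: (sc2 upi E B'P XE X0 pB').
  have inb : forall Y, Y \in best -> Y = set0.
    move=> Y; rewrite mem_filter.
    move=> /andP[/allP al].
    rewrite inE => /orP[/eqP //|YC].
    have := al set0 (mem_head _ _).
    have := other Y YC.
    rewrite s0.
    by move=> h1 h2; move: (le_lt_trans h2 h1); rewrite ltxx.
  have s0b : set0 \in best.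
    rewrite mem_filter mem_head andbT; apply/allP => Y; rewrite inE => /orP[/eqP ->|YC].
      exact: lexx.
    by rewrite s0; apply: ltW; apply: other.
  have Sb : S \in best by apply: vtb; apply/eqP => e; rewrite e in s0b.
  rewrite (inb _ Sb) eqxx; split.
    rewrite /= uC andbT; apply/negP => pC; move: (CpD _ pC); by rewrite inE eqxx.
  move=> Z; rewrite inE; split.
  + move=> /orP[/eqP ->|ZC].
      exists B => //; split; last by apply/set0Pn; exists p; rewrite inE.
      by rewrite setI_in // BD setU0.
    move: ZC => /HC [B' B'P [ZE Z0]]; exists B' => //; split => //.
    have pB' : p \notin B'.
      by apply/negP => pB'; move: Z0; rewrite ZE (blk B' B'P pB') BD eqxx.
    by rewrite setI_notin // ZE.
  + move=> [B'' B''P [ZE Z0]]; apply/orP.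
    case: (boolP (p \in B'')) => pB''.
      by left; rewrite ZE (blk B'' B''P pB'') setI_in // BD setU0.
    right; apply/HC; exists B'' => //; split => //; by rewrite ZE setI_notin.
- (* p joins X0 *)
  set X0 := B :&: D.
  have X0C : X0 \in C by apply/HC; exists B.
  have sX0 : v [set p] < scf X0 by exact: (sc1 upi E BP (erefl _) BD pB).
  have other : forall X, X \in C -> X != X0 -> scf X < v [set p].
    move=> X /HC [B' B'P [XE X0']] XX0.
    case: (boolP (p \in B')) => pB'.
      by move: XX0; rewrite XE (blk B' B'P pB') eqxx.
    exact: (sc2 upi E B'P XE X0' pB').
  have inb : forall Y, Y \in best -> Y = X0.
    move=> Y; rewrite mem_filter => /andP[/allP al]; rewrite inE => /orP[/eqP YE|YC].
      have := al X0; rewrite inE X0C orbT YE s0 => /(_ isT) h; by move: (lt_le_trans sX0 h); rewrite ltxx.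
    case: (eqVneq Y X0) => // YX0.
    have := al X0; rewrite inE X0C orbT => /(_ isT) h; have := other Y YC YX0; move=> h2.
    by move: (lt_trans (lt_le_trans sX0 h) h2); rewrite ltxx.
  have X0b : X0 \in best.
    rewrite mem_filter inE X0C orbT andbT; apply/allP => Y; rewrite inE => /orP[/eqP ->|YC].
      by rewrite s0; apply: ltW.
    case: (eqVneq Y X0) => [->|YX0]; first exact: lexx.
    by apply: ltW; apply: lt_trans sX0; apply: other.
  have Sb : S \in best by apply: vtb; apply/eqP => e; rewrite e in X0b.
  rewrite (inb _ Sb) (negbTE BD); split.
    rewrite map_inj_in_uniq // => X Y XC YC.
    case: (eqVneq X X0) => [->|XX0]; case: (eqVneq Y X0) => [->|YX0] //.
    * by move=> e; move: (CpD _ YC); rewrite -e in_setU1 eqxx.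
    * by move=> e; move: (CpD _ XC); rewrite e in_setU1 eqxx.
  move=> Z; split.
  + move=> /mapP [X XC ->]; case: (eqVneq X X0) => [->|XX0].
      exists B => //; split; first by rewrite setI_in.
      by apply/set0Pn; exists p; rewrite ?eqxx !inE ?eqxx.
    move: (XC) => /HC [B' B'P [XE X0']]; exists B' => //; split => //.
    have pB' : p \notin B'.
      by apply/negP => pB'; move: XX0; rewrite XE (blk B' B'P pB') eqxx.
    by rewrite setI_notin // XE.
  + move=> [B'' B''P [ZE Z0]]; apply/mapP.
    case: (boolP (p \in B'')) => pB''.
      by exists X0 => //; rewrite eqxx ZE (blk B'' B''P pB'') setI_in.
    have ZC : Z \in C by apply/HC; exists B'' => //; split => //; rewrite ZE setI_notin.
    exists Z => //; case: (eqVneq Z X0) => // ZX0.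
    have /set0Pn [z zZ] := Z0.
    have zB'' : z \in B'' by move: zZ; rewrite ZE inE => /andP[].
    have zB : z \in B by move: zZ; rewrite ZX0 inE => /andP[].
    by move: pB''; rewrite (blockE pP B''P BP zB'' zB) pB.
Qed.

Lemma greedy_inv rest : forall done C, pi = done ++ rest -> Inv [set x in done] C ->
  Inv [set: T] (greedy_aux v (phi mx) tb pi C rest).
Proof.
elim: rest => [|p r IH] done C E I /=.
  have -> : [set: T] = [set x in done].
    by apply/setP => x; rewrite !inE -(cats0 done) -E (perm_mem ao) mem_enum.
  exact: I.
apply: (IH (rcons done p)); first by rewrite cat_rcons.
exact: (step E I).
Qed.

Lemma OPT_pos : 0 < OPT v.
Proof.
apply: (lt_le_trans _ (OPT_ge v (partT T0))); rewrite big_set1.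
have T1 : [set: T] != set0 by rewrite -card_gt0 cardsT.
have [_ h] := vc; have [h1 _ _] := h _ _ T1 (subxx _).
exact: lt_le_trans h1.
Qed.

Lemma ratio_one : SW v (greedy_outcome v (phi mx) tb pi) / OPT v = 1.
Proof.
have I0 : Inv [set x in ([::] : seq T)] [::].
  split => // X; split => //; move=> [B _ [XE X0]].
  by move: X0; rewrite XE set_nil setI0 eqxx.
have [uC HC] := greedy_inv (done := [::]) (erefl _) I0.
have [gP _] := Pst_spec T0 mn0 vc; move: gP => /andP[_ /eqP sP].
rewrite /SW /greedy_outcome.
have -> : \sum_(S <- greedy_aux v (phi mx) tb pi [::] pi) v S = \sum_(S in Ps) v S.
  rewrite -big_enum; apply: perm_big; apply: uniq_perm => //; first exact: enum_uniq.
  move=> X; rewrite mem_enum; apply/idP/idP.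
    by move/HC => [B BP [-> _]]; rewrite setIT.
  move=> XP; apply/HC; exists X => //; rewrite setIT; split => //.
  exact: (partition_neq0 pP XP).
rewrite sP divff //; have := OPT_pos; by rewrite lt0r => /andP[].
Qed.
End S4.

Unset Implicit Arguments.

Theorem theorem3 (R : realFieldType) (T : finType) (mn mx : R) :
  (0 < #|T|)%N -> 0 < mn -> mn <= mx -> 2 * mn <= mx -> mx < 3 * mn ->
  exists phi : policy R T,
    [/\ non_wasteful mn mx phi, irrevocable mn mx phi &
        forall tb : tiebreak T, valid_tiebreak tb ->
          competitive_ratio_is mn mx phi tb 1].
Proof.
move=> T0 mn0 mnx _ mx3.
exists (phi mx); split; [exact: phi_nw | exact: phi_irr |].
move=> tb vtb; split.
- move=> r [v [pi [vc ao ->]]].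
  by rewrite (ratio_one T0 mn0 mnx mx3 vc ao vtb).
- move=> b Hb; apply: Hb.
  pose v0 : charfun R T := fun S => if S == set0 then 0 else mn.
  have vc0 : in_class mn mx v0.
    split; first by rewrite /v0 eqxx.
    move=> S S' S0 SS'.
    have S'0 : S' != set0.
      apply/negP => /eqP e; move: SS'; rewrite e subset0 => /eqP e'; by rewrite e' eqxx in S0.
    by rewrite /v0 (negbTE S0) (negbTE S'0) lexx.
  have ao0 : arrival_order (enum T) by exact: perm_refl.
  exists v0, (enum T); split => //.
  by rewrite (ratio_one T0 mn0 mnx mx3 vc0 ao0 vtb).
Qed.
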